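(* Let $T$ be a conservative ergodic invertible measure-preserving transformation of $(X,\mathcal B,\mu)$. If $T$ is subsequence weakly rationally ergodic and $S$ is an invertible nonsingular transformation with $ST=TS$, then $S$ is measure-preserving. In particular $T$ is not squashable.
   Context: $(X,\mathcal B,\mu)$ is a standard Borel space with nonatomic $\sigma$-finite measure. $S$ is invertible nonsingular if it is invertible, measurable, and $\mu(A)=0\iff\mu(SA)=0$. $T$ is squashable if it commutes with some invertible nonsingular $S$ that is not measure-preserving. For $F$ of positive finite measure, $u_k(F)=\mu(F\cap T^kF)/\mu(F)^2$, $a_n(F)=\sum_{k=0}^{n-1}u_k(F)$. $T$ is subsequence weakly rationally ergodic if there are a sequence $n_i\to\infty$ and a set $F$ of positive finite measure with $\mu(X\setminus\bigcup_{i\ge0}T^iF)=0$ such that for all measurable $A,B\subseteq F$, $\frac{1}{a_{n_i}(F)}\sum_{k=0}^{n_i-1}\mu(A\cap T^kB)\to\mu(A)\mu(B)$. *)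

(* Defs.v *)
From HB Require Import structures.
From mathcomp Require Import all_boot all_order all_algebra.
From mathcomp Require Import all_classical all_reals all_analysis.
Set Implicit Arguments. Unset Strict Implicit. Unset Printing Implicit Defensive.
Import Order.TTheory GRing.Theory Num.Theory.
Import numFieldNormedType.Exports.
Local Open Scope classical_set_scope.
Local Open Scope ring_scope.

Section Defs.
Context {R : realType} {d : measure_display} {X : measurableType d}.

(* Standard Borel space: Borel-isomorphic to a Borel subset of R
   (Kuratowski: every standard Borel space is, and conversely). *)
Definition standard_Borel : Prop :=
  exists (f : X -> R) (B : set R),
    measurable B /\ injective f /\ f @` setT = B /\
    measurable_fun setT f /\
    (forall A : set X, measurable A -> measurable (f @` A)).

Variable mu : {measure set X -> \bar R}.

Definition nonatomic : Prop :=
  forall A : set X, measurable A -> (0 < mu A)%E ->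
    exists B : set X, measurable B /\ B `<=` A /\ (0 < mu B)%E /\ (mu B < mu A)%E.

Definition invertible (S : X -> X) : Prop :=
  exists S' : X -> X, cancel S S' /\ cancel S' S /\
    measurable_fun setT S /\ measurable_fun setT S'.

Definition nonsingular (S : X -> X) : Prop :=
  invertible S /\
  forall A : set X, measurable A -> (mu A = 0%E <-> mu (S @` A) = 0%E).

Definition measure_preserving (S : X -> X) : Prop :=
  measurable_fun setT S /\
  forall A : set X, measurable A -> mu (S @^-1` A) = mu A.

Definition conservative (T : X -> X) : Prop :=
  forall W : set X, measurable W ->
    (forall n : nat, (0 < n)%N -> W `&` (iter n T) @^-1` W = set0) ->
    mu W = 0%E.

Definition ergodic (T : X -> X) : Prop :=
  forall A : set X, measurable A -> T @^-1` A = A ->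
    mu A = 0%E \/ mu (~` A) = 0%E.

Definition squashable (T : X -> X) : Prop :=
  exists S : X -> X, nonsingular S /\ S \o T = T \o S /\ ~ measure_preserving S.

Definition u_k (T : X -> X) (F : set X) (k : nat) : R :=
  fine (mu (F `&` (iter k T) @` F)) / (fine (mu F)) ^+ 2.

Definition a_n (T : X -> X) (F : set X) (n : nat) : R :=
  \sum_(0 <= k < n) u_k T F k.

Definition subsequence_weakly_rationally_ergodic (T : X -> X) : Prop :=
  exists (n : nat -> nat) (F : set X),
    (forall M : nat, exists i0, forall i, (i0 <= i)%N -> (M <= n i)%N) /\
    measurable F /\ (0 < mu F)%E /\ (mu F < +oo)%E /\
    mu (~` \bigcup_(i in setT) (iter i T) @` F) = 0%E /\
    forall A B : set X, measurable A -> measurable B -> A `<=` F -> B `<=` F ->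
      (fun i => (a_n T F (n i))^-1 *
          \sum_(0 <= k < n i) fine (mu (A `&` (iter k T) @` B)))
        @ \oo --> fine (mu A) * fine (mu B).

End Defs.

(* Main.v *)
Set Warnings "-notation-overridden,-ambiguous-paths,-notation-incompatible-prefix".
Require Import Defs.
From HB Require Import structures.
From mathcomp Require Import all_boot all_order all_algebra.
From mathcomp Require Import all_classical all_reals all_analysis.
From mathcomp Require Import lra.

Set Implicit Arguments. Unset Strict Implicit. Unset Printing Implicit Defensive.
Import Order.TTheory GRing.Theory Num.Theory.
Import numFieldNormedType.Exports.
Local Open Scope classical_set_scope.
Local Open Scope ring_scope.

Lemma hahn_aux (R : realType) (d : measure_display) (X : measurableType d)
  (mu rho : {measure set X -> \bar R}) (D : set X) (mD : measurable D)
  (muD : (mu D < +oo)%E) (rhoD : (rho D < +oo)%E) (c : R) :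
  exists P, [/\ measurable P, P `<=` D,
    (forall E, measurable E -> E `<=` P -> (c%:E * mu E <= rho E)%E) &
    (forall E, measurable E -> E `<=` D `\` P -> (rho E <= c%:E * mu E)%E)].
Proof.
pose nu := cadd (charge_of_finite_measure (mfrestr mD rhoD))
   (cscale (- c) (charge_of_finite_measure (mfrestr mD muD))).
have [P [N [[mP posP] [mN negN] PN PN0]]] := Hahn_decomposition nu.
have nuE E : E `<=` D -> nu E = (rho E - c%:E * mu E)%E.
  move=> ED; rewrite /nu /cadd /cscale /= /charge_of_finite_measure /mfrestr /mrestr.
  by rewrite /cscale /= /mfrestr /mrestr (setIidl ED) EFinN mulNe.
have finm E : measurable E -> E `<=` D -> mu E \is a fin_num.
  move=> mE EsD; rewrite ge0_fin_numE// (le_lt_trans _ muD)// le_measure// inE//.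
have finr E : measurable E -> E `<=` D -> rho E \is a fin_num.
  move=> mE EsD; rewrite ge0_fin_numE// (le_lt_trans _ rhoD)// le_measure// inE//.
exists (P `&` D); split.
- exact: measurableI.
- exact: subIsetr.
- move=> E mE EP; have ED : E `<=` D by move=> x /EP[].
  have h : (0 <= rho E - c%:E * mu E)%E.
    by rewrite -nuE //; exact: posP (fun x Ex => (EP x Ex).1).
  by move: h; rewrite sube_ge0 // fin_numM // finm.
- move=> E mE EDP; have ED : E `<=` D by move=> x /EDP[].
  have EN : E `<=` N.
    move=> x Ex; have := EDP x Ex => -[Dx nPx].
    have : (P `|` N) x by rewrite PN.
    by case=> // Px; exfalso; apply: nPx.
  have h : (rho E - c%:E * mu E <= 0)%E.
    by rewrite -nuE //; exact: negN.
  by move: h; rewrite sube_le0 // fin_numM // finm.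
Qed.
Lemma real_squeeze (R : realType) (x y c0 : R) : 0 <= x -> 0 <= y -> 0 < c0 ->
  (forall dl, 0 < dl -> exists c, c0 <= c /\ c * x <= (c + dl) * y /\ c * y <= (c + dl) * x) ->
  x = y.
Proof.
move=> x0 y0 c00 H.
have side : forall a b : R, 0 <= a -> 0 <= b ->
   (forall dl, 0 < dl -> exists c, c0 <= c /\ c * b <= (c + dl) * a) -> b <= a.
  move=> a b a0 b0 Hab; rewrite leNgt; apply/negP => ab.
  pose t := (b - a) / (2 * (a + 1)).
  have t0 : 0 < t by rewrite /t divr_gt0 // ?subr_gt0 //; lra.
  have tE : t * (2 * (a + 1)) = b - a.
    by rewrite /t mulfVK //; apply/lt0r_neq0; lra.
  have [c [cc0 hc]] := Hab (c0 * t) (mulr_gt0 c00 t0).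
  nra.
apply/eqP; rewrite eq_le; apply/andP; split.
  apply: side => // dl /H [c [? [? ?]]]; by exists c.
apply: side => // dl /H [c [? [? ?]]]; by exists c.
Qed.

Lemma fine_le0_eq0 (R : realType) (x : \bar R) : x \is a fin_num -> (0 <= x)%E -> fine x <= 0 -> x = 0%E.
Proof. by case: x => //= r _; rewrite lee_fin => h1 h2; congr EFin; apply/eqP; rewrite eq_le h1 h2. Qed.

Section pfm.
Local Open Scope ereal_scope.
Context (R : realType) (d : measure_display) (X : measurableType d)
  (mu : {measure set X -> \bar R}) (f : X -> X) (mf : measurable_fun setT f).

Definition pfm of measurable_fun setT f := fun A => mu (f @^-1` A).

Let pfm0 : pfm mf set0 = 0.
Proof. by rewrite /pfm preimage_set0 measure0. Qed.

Let pfm_ge0 A : 0 <= pfm mf A.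
Proof. by apply: measure_ge0. Qed.

Let pfm_sigma_additive : semi_sigma_additive (pfm mf).
Proof.
move=> F mF tF mUF; rewrite /pfm preimage_bigcup.
apply: measure_semi_sigma_additive.
- by move=> n; rewrite -[X in measurable X]setTI; exact: mf.
- apply/trivIsetP => /= i j _ _ ij; rewrite -preimage_setI.
  by move/trivIsetP : tF => /(_ _ _ _ _ ij) ->//; rewrite preimage_set0.
- by rewrite -preimage_bigcup -[X in measurable X]setTI; exact: mf.
Qed.

HB.instance Definition _ := isMeasure.Build _ _ _
  (pfm mf) pfm0 pfm_ge0 pfm_sigma_additive.
End pfm.
Section layer.
Context (R : realType) (d : measure_display) (X : measurableType d)
  (mu rho : {measure set X -> \bar R}) (D : set X) (mD : measurable D)
  (muD : (mu D < +oo)%E) (rhoD : (rho D < +oo)%E).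

Lemma finD (nu : {measure set X -> \bar R}) : (nu D < +oo)%E ->
  forall E, measurable E -> E `<=` D -> nu E \is a fin_num.
Proof.
move=> nuD E mE ED; rewrite ge0_fin_numE// (le_lt_trans _ nuD)// le_measure// inE//.
Qed.

Lemma fine_mono (nu : {measure set X -> \bar R}) : (nu D < +oo)%E ->
  forall E F, measurable E -> measurable F -> E `<=` F -> F `<=` D ->
  fine (nu E) <= fine (nu F).
Proof.
move=> nuD E F mE mF EF FD; apply: fine_le; try apply: finD => //.
  exact: subset_trans FD.
by rewrite le_measure // inE.
Qed.

Lemma hahn_fine c : exists P, [/\ measurable P, P `<=` D,
    (forall E, measurable E -> E `<=` P -> c * fine (mu E) <= fine (rho E)) &
    (forall E, measurable E -> E `<=` D `\` P -> fine (rho E) <= c * fine (mu E))].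
Proof.
have [P [mP PD h1 h2]] := hahn_aux mD muD rhoD c.
exists P; split => // E mE EP.
  have ED : E `<=` D := subset_trans EP PD.
  have := h1 E mE EP.
  by rewrite -(fineK (finD muD mE ED)) -(fineK (finD rhoD mE ED)) -EFinM lee_fin.
have ED : E `<=` D by move=> x /EP[].
have := h2 E mE EP.
by rewrite -(fineK (finD muD mE ED)) -(fineK (finD rhoD mE ED)) -EFinM lee_fin.
Qed.

Variables (G : nat -> set X -> set X) (w : nat -> R) (N : nat -> nat).
Hypothesis rho_ac : forall E, measurable E -> E `<=` D -> mu E = 0%E -> rho E = 0%E.
Hypothesis rhoD0 : (0 < rho D)%E.
Hypothesis mG : forall k A, measurable A -> measurable (G k A).
Hypothesis w0 : forall i, 0 <= w i.
Hypothesis Hmu : forall A B, measurable A -> measurable B -> A `<=` D -> B `<=` D ->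
   (fun i => w i * \sum_(0 <= k < N i) fine (mu (B `&` G k A))) @ \oo -->
     fine (mu B) * fine (mu A).
Hypothesis Hrho : forall A B, measurable A -> measurable B -> A `<=` D -> B `<=` D ->
   (fun i => w i * \sum_(0 <= k < N i) fine (rho (B `&` G k A))) @ \oo -->
     fine (rho B) * fine (rho A).

Lemma pair_ineq B c dl : measurable B -> B `<=` D -> 0 < fine (mu B) -> 0 < c -> 0 < dl ->
  (forall E, measurable E -> E `<=` B ->
     c * fine (mu E) <= fine (rho E) /\ fine (rho E) <= (c + dl) * fine (mu E)) ->
  forall A, measurable A -> A `<=` D ->
  c * fine (mu A) <= (c + dl) * fine (rho A) /\ c * fine (rho A) <= (c + dl) * fine (mu A).
Proof.
move=> mB BD mB0 c0 dl0 hB A mA AD.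
have hx := Hmu mA mB AD BD.
have hy := Hrho mA mB AD BD.
have i1 : c * (fine (mu B) * fine (mu A)) <= fine (rho B) * fine (rho A).
  apply: (ler_cvg_to (cvgMl_tmp (a := c) hx) hy); apply: nearW => i.
  rewrite mulrA (mulrC c) -mulrA; apply: ler_wpM2l => //.
  rewrite mulr_sumr; apply: ler_sum => k _.
  by have [h1 _] := hB (B `&` G k A) (measurableI _ _ mB (mG k mA)) (fun x (hx : (_ `&` _) x) => hx.1).
have i2 : fine (rho B) * fine (rho A) <= (c + dl) * (fine (mu B) * fine (mu A)).
  apply: (ler_cvg_to hy (cvgMl_tmp (a := c + dl) hx)); apply: nearW => i.
  rewrite mulrA (mulrC (c + dl)) -mulrA; apply: ler_wpM2l => //.
  rewrite mulr_sumr; apply: ler_sum => k _.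
  by have [_ h1] := hB (B `&` G k A) (measurableI _ _ mB (mG k mA)) (fun x (hx : (_ `&` _) x) => hx.1).
have [b1 b2] := hB B mB (@subset_refl _ B).
have mA0 : 0 <= fine (mu A) by apply: fine_ge0.
have rA0 : 0 <= fine (rho A) by apply: fine_ge0.
split; nra.
Qed.

Lemma c0_pos (c0 : R) P : 0 < fine (rho D) -> c0 * fine (mu D) < fine (rho D) ->
  measurable P -> P `<=` D ->
  (forall E, measurable E -> E `<=` D `\` P -> fine (rho E) <= c0 * fine (mu E)) ->
  0 < c0 -> 0 < fine (mu P).
Proof.
move=> rD0 hc mP PD h2 c00; rewrite ltNge; apply/negP => hP.
have muP : mu P = 0%E.
  by apply: fine_le0_eq0 => //; exact: finD.
have rP := rho_ac mP PD muP.
have mDP : measurable (D `\` P) by exact: measurableD.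
have e1 : fine (rho D) = fine (rho (D `\` P)) + fine (rho (D `&` P)).
  rewrite (measureDI rho mD mP) fineD //; apply: finD => //.
  - exact: measurableI.
rewrite (setIidr PD) rP /= addr0 in e1.
have := h2 _ mDP (@subset_refl _ _).
have : fine (mu (D `\` P)) <= fine (mu D).
  by apply: fine_mono => //; exact: subDsetl.
have : 0 <= fine (mu (D `\` P)) by apply: fine_ge0.
nra.
Qed.

Lemma layer_main A : measurable A -> A `<=` D -> rho A = mu A.
Proof.
move=> mA AD.
have rDfin := finD rhoD mD (@subset_refl _ D).
have mDfin := finD muD mD (@subset_refl _ D).
have rD0 : 0 < fine (rho D) by apply: fine_gt0; rewrite rhoD0 rhoD.
have mD0 : 0 < fine (mu D).
  rewrite lt0r fine_ge0 // andbT; apply/negP => /eqP h.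
  have : mu D = 0%E by rewrite -(fineK mDfin) h.
  move/(rho_ac mD (@subset_refl _ D)) => h'; have := rhoD0; by rewrite h' ltxx.
pose c0 := fine (rho D) / (2 * fine (mu D)).
have c00 : 0 < c0 by rewrite /c0 divr_gt0 // mulr_gt0.
have c0E : c0 * (2 * fine (mu D)) = fine (rho D).
  by rewrite /c0 mulfVK //; apply/lt0r_neq0; rewrite mulr_gt0.
have hc0 : c0 * fine (mu D) < fine (rho D) by nra.
have key : forall dl, 0 < dl -> exists c, c0 <= c /\
    c * fine (mu A) <= (c + dl) * fine (rho A) /\ c * fine (rho A) <= (c + dl) * fine (mu A).
  move=> dl dl0.
  pose cj (j : nat) := c0 + j%:R * dl.
  have [Pf hPf] := choice (fun j => hahn_fine (cj j)).
  have mPf j : measurable (Pf j) by have [] := hPf j.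
  have PfD j : Pf j `<=` D by have [] := hPf j.
  have cj0 j : c0 <= cj j by rewrite /cj lerDl mulr_ge0 // ltW.
  suff [j hj] : exists j, 0 < fine (mu (Pf j `\` Pf j.+1)).
    exists (cj j); split => //.
    have mL : measurable (Pf j `\` Pf j.+1) by exact: measurableD.
    apply: (pair_ineq mL _ hj (lt_le_trans c00 (cj0 j)) dl0) => //.
      by move=> x [/PfD].
    move=> E mE EL; split.
      by have [_ _ h _] := hPf j; apply: h => // x /EL[].
    have [_ _ _ h] := hPf j.+1.
    have -> : c0 + j%:R * dl + dl = cj j.+1 by rewrite /cj -nat1r mulrDl mul1r; lra.
    by apply: h => // x /EL[/PfD ? ?].
  apply/not_existsP => hn.
  have L0 j : mu (Pf j `\` Pf j.+1) = 0%E.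
    have mL : measurable (Pf j `\` Pf j.+1) by exact: measurableD.
    have := hn j; move/negP; rewrite -leNgt => h.
    apply: fine_le0_eq0 => //; apply: finD => //.
    by move=> x [/PfD].
  have Q0 j : mu (Pf 0 `\` Pf j) = 0%E.
    elim: j => [|j IH]; first by rewrite setDv measure0.
    apply: (subset_measure0 (B := (Pf 0 `\` Pf j) `|` (Pf j `\` Pf j.+1))).
    - exact: measurableD.
    - by apply: measurableU; exact: measurableD.
    - move=> x [P0x nPx]; have [Px|nPjx] := pselect (Pf j x); first by right.
      by left.
    - by apply: null_set_setU => //; exact: measurableD.
  have mQ0 : 0 < fine (mu (Pf 0)).
    have [_ _ _ h] := hPf 0.
    apply: (@c0_pos c0 (Pf 0) rD0 hc0 (mPf 0) (PfD 0)) => //.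
    by move=> E mE EP; have := h E mE EP; rewrite /cj mul0r addr0.
  pose j := Num.Def.archi_bound (fine (rho D) / (dl * fine (mu (Pf 0)))).
  have hj : fine (rho D) / (dl * fine (mu (Pf 0))) < j%:R.
    by apply: archi_boundP; rewrite divr_ge0 // ?mulr_ge0 // ltW.
  have mI : measurable (Pf 0 `&` Pf j) by exact: measurableI.
  have e1 : fine (mu (Pf 0)) = fine (mu (Pf 0 `&` Pf j)).
    rewrite {1}(measureDI mu (mPf 0) (mPf j)).
    have -> : forall a b : \bar R, a = 0%E -> (a + b)%E = b by move=> a b ->; rewrite add0e.
      by [].
    exact: Q0.
  have [_ _ h _] := hPf j.
  have h1 := h _ mI (fun x (hx : (_ `&` _) x) => hx.2).
  have h2 : fine (rho (Pf 0 `&` Pf j)) <= fine (rho D).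
    apply: fine_mono => //; first exact: subset_trans (fun x (hx : (_ `&` _) x) => hx.1) (PfD 0).
  rewrite -e1 /cj in h1.
  have dm0 : 0 < dl * fine (mu (Pf 0)) by rewrite mulr_gt0.
  have hj' : fine (rho D) < j%:R * (dl * fine (mu (Pf 0))).
    by rewrite -ltr_pdivrMr.
  have : 0 <= c0 * fine (mu (Pf 0)) by rewrite mulr_ge0 // ltW.
  nra.
have := real_squeeze (fine_ge0 (measure_ge0 mu A)) (fine_ge0 (measure_ge0 rho A)) c00 key.
move=> h; rewrite -(fineK (finD muD mA AD)) -(fineK (finD rhoD mA AD)) h //.
Qed.

End layer.

Section helpers.
Context (R : realType) (d : measure_display) (X : measurableType d).

Lemma img_pre (f g : X -> X) (A : set X) : cancel f g -> cancel g f -> f @` A = g @^-1` A.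
Proof.
move=> fg gf; apply/seteqP; split => x.
- by case=> y Ay <-; rewrite /preimage /= fg.
- by move=> Agx; exists (g x) => //; rewrite gf.
Qed.

Lemma iter_comm (f g : X -> X) : (forall x, f (g x) = g (f x)) ->
  forall n x, iter n f (g x) = g (iter n f x).
Proof. by move=> fg; elim => //= n IH x; rewrite IH fg. Qed.

Lemma iter_cancel (f g : X -> X) : cancel f g -> forall n, cancel (iter n f) (iter n g).
Proof. by move=> fg; elim => //= n IH x; rewrite iterSr fg IH. Qed.

Lemma measurable_iter (f : X -> X) : measurable_fun setT f ->
  forall n, measurable_fun setT (iter n f).
Proof. by move=> mf; elim => [|n IH] /=; [exact: measurable_id|exact: measurableT_comp]. Qed.

Lemma mpre (f : X -> X) (A : set X) : measurable_fun setT f -> measurable A ->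
  measurable (f @^-1` A).
Proof. by move=> mf mA; rewrite -[_ @^-1` _]setTI; exact: mf. Qed.

Lemma iter_pres (nu : {measure set X -> \bar R}) (f : X -> X) : measurable_fun setT f ->
  (forall A, measurable A -> nu (f @^-1` A) = nu A) ->
  forall n A, measurable A -> nu (iter n f @^-1` A) = nu A.
Proof.
move=> mf hf; elim => // n IH A mA.
have -> : iter n.+1 f @^-1` A = iter n f @^-1` (f @^-1` A) by [].
by rewrite IH ?hf //; exact: mpre.
Qed.

Definition good (rho mu : {measure set X -> \bar R}) (E0 : set X) :=
  forall E, measurable E -> E `<=` E0 -> rho E = mu E.

Lemma good_pre (rho mu : {measure set X -> \bar R}) (f g : X -> X) E0 :
  cancel f g -> cancel g f -> measurable_fun setT g ->
  (forall A, measurable A -> rho (f @^-1` A) = rho A) ->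
  (forall A, measurable A -> mu (f @^-1` A) = mu A) ->
  good rho mu E0 -> good rho mu (f @^-1` E0).
Proof.
move=> fg gf mg hr hm gE E mE EE0.
have EE : E = f @^-1` (g @^-1` E).
  by apply/seteqP; split => x /=; rewrite fg.
have mgE : measurable (g @^-1` E) by exact: mpre.
rewrite EE hr // hm // gE //.
by move=> x /= /EE0; rewrite /preimage /= gf.
Qed.

Lemma good_iter (rho mu : {measure set X -> \bar R}) (f g : X -> X) :
  cancel f g -> cancel g f -> measurable_fun setT g ->
  (forall A, measurable A -> rho (f @^-1` A) = rho A) ->
  (forall A, measurable A -> mu (f @^-1` A) = mu A) ->
  forall n E0, good rho mu E0 -> good rho mu (iter n f @^-1` E0).
Proof.
move=> fg gf mg hr hm; elim => // n IH E0 gE.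
have -> : iter n.+1 f @^-1` E0 = iter n f @^-1` (f @^-1` E0) by [].
by apply: IH; apply: good_pre gE.
Qed.

Lemma good_bigcup (rho mu : {measure set X -> \bar R}) (V : nat -> set X) :
  (forall n, measurable (V n)) -> (forall n, good rho mu (V n)) ->
  good rho mu (\bigcup_n V n).
Proof.
move=> mV gV E mE EV.
pose F n := E `&` V n.
have mF n : measurable (F n) by exact: measurableI.
have EF : E = \bigcup_k seqDU F k.
  rewrite -seqDU_bigcup_eq /F -setI_bigcupr; apply/esym/setIidl => //.
have mS := seqDU_measurable mF.
have tS := @trivIset_seqDU _ F.
have sub k : seqDU F k `<=` V k by move=> x /(@subset_seqDU _ F k) [].
rewrite EF !measure_bigcup //.
by apply: eq_eseriesr => k _; apply: gV.
Qed.

Lemma nnmu_pos (mu : {measure set X -> \bar R}) (A : set X) : mu A <> 0%E -> (0 < mu A)%E.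
Proof. by move=> h; rewrite lt0e measure_ge0 andbT; apply/eqP. Qed.

End helpers.

Unset Implicit Arguments.

Theorem mainTheorem6 (R : realType) (d : measure_display) (X : measurableType d)
    (mu : {measure set X -> \bar R}) (T : X -> X) :
  @standard_Borel R d X ->
  sigma_finite setT mu ->
  nonatomic mu ->
  invertible T -> measure_preserving mu T ->
  conservative mu T -> ergodic mu T ->
  subsequence_weakly_rationally_ergodic mu T ->
  (forall S : X -> X, nonsingular mu S -> S \o T = T \o S ->
     measure_preserving mu S) /\
  ~ squashable mu T.
Proof.
move=> _ _ _ [T' [cT [cT' [mT mT']]]] [_ Tpres] _ herg
  [n [F [_ [mF [F0 [Foo [Fsweep Hswre]]]]]]].
suff H1 : forall S : X -> X, nonsingular mu S -> S \o T = T \o S ->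
     measure_preserving mu S.
  by split => // -[S [Sns [ST hnp]]]; apply: hnp; exact: H1.
move=> S Sns ST.
have [[S' [cS [cS' [mS mS']]]] Sn] := Sns.
split => //.
have ST1 x : S (T x) = T (S x) by have := congr1 (fun f => f x) ST.
have T'pres A : measurable A -> mu (T' @^-1` A) = mu A.
  move=> mA; transitivity (mu (T @^-1` (T' @^-1` A))).
    by rewrite Tpres //; exact: mpre.
  by congr (mu _); apply/seteqP; split => x /=; rewrite /preimage /= cT.
have TS' x : T (S' x) = S' (T x).
  by rewrite -{2}[x]cS' -ST1 cS.
have T'S' x : T' (S' x) = S' (T' x).
  by apply: (can_inj cT); rewrite cT' TS' cT'.
have TT' x : T (T' x) = T' (T x) by rewrite cT cT'.
pose rho := pfm mu mS'.
have rhoE E : rho E = mu (S @` E) by rewrite (img_pre _ cS cS').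
have Sn0 E : measurable E -> mu E = 0%E -> rho E = 0%E.
  by move=> mE h; rewrite rhoE; apply/(Sn E mE).
have [i hi] : exists i, (0 < mu (S' @^-1` F `&` iter i T' @^-1` F))%E.
  apply/not_existsP => hn.
  have h0 j : mu (S' @^-1` F `&` iter j T' @^-1` F) = 0%E.
    apply/eqP; rewrite -measure_le0 leNgt; apply/negP; exact: hn.
  have mSF : measurable (S' @^-1` F) by exact: mpre.
  have : mu (S @` F) = 0%E.
    rewrite (img_pre _ cS cS').
    pose G j := if j is j'.+1 then S' @^-1` F `&` iter j' T' @^-1` F
                else ~` \bigcup_(k in setT) (iter k T) @` F.
    have mG j : measurable (G j).
      case: j => [|j] /=.
        apply: measurableC; apply: bigcup_measurable => k _.
        rewrite (img_pre _ (iter_cancel cT k) (iter_cancel cT' k)).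
        exact: mpre (measurable_iter mT' k) mF.
      by apply: measurableI => //; exact: mpre (measurable_iter mT' j) mF.
    apply/eqP; rewrite -measure_le0.
    apply: (le_trans (measure_sigma_subadditive _ mG mSF _)).
      move=> x Fx.
      have [Ux|nUx] := pselect ((\bigcup_(k in setT) (iter k T) @` F) x).
        case: Ux => k _ Fk; exists k.+1 => //=; split => //.
        by move: Fk; rewrite (img_pre _ (iter_cancel cT k) (iter_cancel cT' k)).
      by exists 0%N.
    rewrite eseries0 // => -[|j] _ _ /=; first exact: Fsweep.
    exact: h0.
  by move/(Sn F mF) => hF; rewrite hF ltxx in F0.
pose D := F `&` (iter i T' \o S) @^-1` F.
have mD : measurable D.
  by apply: measurableI => //; apply: mpre => //; apply: measurableT_comp => //;
     exact: measurable_iter.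
pose RR (A : set X) := iter i T @^-1` (S' @^-1` A).
have RF A : A `<=` D -> RR A `<=` F.
  move=> AD y /AD [_ /=]; rewrite cS'.
  by rewrite (iter_cancel cT i).
have rhoR A : measurable A -> rho A = mu (RR A).
  by move=> mA; rewrite /RR (iter_pres mT Tpres) //; exact: mpre.
have mR A : measurable A -> measurable (RR A).
  by move=> mA; apply: mpre; [exact: measurable_iter|exact: mpre].
have muFfin : mu F \is a fin_num by rewrite ge0_fin_numE.
have muD : (mu D < +oo)%E.
  rewrite (le_lt_trans _ Foo) // le_measure ?inE //; by move=> x [].
have rhoD : (rho D < +oo)%E.
  rewrite rhoR // (le_lt_trans _ Foo) // le_measure ?inE //; [exact: mR|exact: RF].
have rhoD0 : (0 < rho D)%E.
  rewrite /rho /pfm; apply: (lt_le_trans hi); rewrite le_measure ?inE //.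
  - by apply: measurableI; [exact: mpre|exact: mpre (measurable_iter mT' i) mF].
  - exact: mpre.
  - by move=> y [/= hy1 hy2]; split => //=; rewrite cS'.
have rho_ac E : measurable E -> E `<=` D -> mu E = 0%E -> rho E = 0%E.
  by move=> mE _; exact: Sn0.
have mG k A : measurable A -> measurable (iter k T @` A).
  move=> mA; rewrite (img_pre _ (iter_cancel cT k) (iter_cancel cT' k)).
  by apply: mpre => //; exact: measurable_iter.
pose w i := (a_n mu T F (n i))^-1.
have w0 j : 0 <= w j.
  rewrite /w invr_ge0 /a_n; apply: sumr_ge0 => k _; rewrite /u_k.
  by apply: divr_ge0; [exact: fine_ge0|exact: exprn_ge0 (fine_ge0 _)].
have Hmu A B : measurable A -> measurable B -> A `<=` D -> B `<=` D ->
   (fun j => w j * \sum_(0 <= k < n j) fine (mu (B `&` iter k T @` A))) @ \oo -->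
     fine (mu B) * fine (mu A).
  move=> mA mB AD BD; apply: Hswre => //.
  - exact: subset_trans BD (fun x (hx : D x) => hx.1).
  - exact: subset_trans AD (fun x (hx : D x) => hx.1).
have Hrho A B : measurable A -> measurable B -> A `<=` D -> B `<=` D ->
   (fun j => w j * \sum_(0 <= k < n j) fine (rho (B `&` iter k T @` A))) @ \oo -->
     fine (rho B) * fine (rho A).
  move=> mA mB AD BD; rewrite (rhoR _ mA) (rhoR _ mB).
  have eq k : rho (B `&` iter k T @` A) = mu (RR B `&` iter k T @` RR A).
    rewrite rhoR; last by apply: measurableI => //; exact: mG.
    congr (mu _).
    rewrite !(img_pre _ (iter_cancel cT k) (iter_cancel cT' k)).
    have c1 : forall x, iter k T' (T x) = T (iter k T' x).
      by apply: iter_comm => x; rewrite TT'.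
    have c2 : forall x, iter i T (iter k T' x) = iter k T' (iter i T x).
      by apply: iter_comm => x; rewrite c1.
    have c3 : forall x, iter k T' (S' x) = S' (iter k T' x).
      by apply: iter_comm => x; rewrite T'S'.
    apply/seteqP; split => y [h1 h2]; split => //; move: h2; rewrite /RR /preimage /=.
      by rewrite c2 c3.
    by rewrite c2 c3.
  under eq_fun do under eq_bigr do rewrite eq.
  by apply: Hswre => //; [exact: mR|exact: mR|exact: RF|exact: RF].
have lay := layer_main mD muD rhoD rho_ac rhoD0 mG w0 Hmu Hrho.
have gD : good rho mu D by move=> E mE ED; exact: lay.
have hrT A : measurable A -> rho (T @^-1` A) = rho A.
  move=> mA; rewrite /rho /pfm.
  have -> : S' @^-1` (T @^-1` A) = T @^-1` (S' @^-1` A).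
    by apply/seteqP; split => x /=; rewrite TS'.
  by rewrite Tpres //; exact: mpre.
have hrT' A : measurable A -> rho (T' @^-1` A) = rho A.
  move=> mA; rewrite /rho /pfm.
  have -> : S' @^-1` (T' @^-1` A) = T' @^-1` (S' @^-1` A).
    by apply/seteqP; split => x /=; rewrite T'S'.
  by rewrite T'pres //; exact: mpre.
pose W := \bigcup_m (iter m T @^-1` D).
pose U := \bigcup_k (iter k T' @^-1` W).
have mW : measurable W.
  by apply: bigcup_measurable => m _; apply: mpre => //; exact: measurable_iter.
have mU : measurable U.
  by apply: bigcup_measurable => m _; apply: mpre => //; exact: measurable_iter.
have gW : good rho mu W.
  apply: good_bigcup => m; first by apply: mpre => //; exact: measurable_iter.
  exact: (good_iter cT cT' mT' hrT Tpres).
have gU : good rho mu U.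
  apply: good_bigcup => m; first by apply: mpre => //; exact: measurable_iter.
  exact: (good_iter cT' cT mT hrT' T'pres).
have TU : T @^-1` U = U.
  apply/seteqP; split => x /=.
  - case=> -[|k] _ [m _ hm] /=.
      exists 0%N => //; exists m.+1 => //=.
      by move: hm; rewrite /preimage /= -iterSr.
    exists k => //; exists m => //; move: hm; rewrite /preimage /=.
    by rewrite -[T' (iter k T' (T x))]/(iter k.+1 T' (T x)) iterSr cT.
  - case=> k _ [m _ hm]; exists k.+1 => //; exists m => //.
    by rewrite /preimage /= -[T' (iter k T' (T x))]/(iter k.+1 T' (T x)) iterSr cT.
have DU : D `<=` U by move=> x Dx; exists 0%N => //; exists 0%N.
have muD0 : mu D <> 0%E by move/(rho_ac D mD (@subset_refl _ D)) => h; rewrite h ltxx in rhoD0.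
have nU : mu (~` U) = 0%E.
  case: (herg U mU TU) => // hU; exfalso; apply: muD0.
  by apply: (subset_measure0 mD mU DU hU).
have rnU : rho (~` U) = 0%E by apply: Sn0 => //; exact: measurableC.
move=> A mA.
have mSA : measurable (S @^-1` A) by exact: mpre.
have -> : mu A = rho (S @^-1` A).
  by rewrite /rho /pfm; congr (mu _); apply/seteqP; split => x /=; rewrite cS'.
move: (S @^-1` A) mSA => E mE.
have mEU : measurable (E `\` U) by exact: measurableD.
have nEU (nu : {measure set X -> \bar R}) : nu (~` U) = 0%E -> nu (E `\` U) = 0%E.
  move=> h; apply: (subset_measure0 mEU (measurableC mU) _ h).
  by move=> x [].
have e1 : rho E = (rho (E `\` U) + rho (E `&` U))%E := measureDI rho mE mU.
have e2 : mu E = (mu (E `\` U) + mu (E `&` U))%E := measureDI mu mE mU.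
have e3 : rho (E `\` U) = 0%E := nEU rho rnU.
have e4 : mu (E `\` U) = 0%E := nEU mu nU.
rewrite e1 e2 e3 e4 !add0e; symmetry.
apply: gU; first exact: measurableI.
by move=> x [].
Qed.
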